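(* Let $\rho(\mathbf{x})\in[0,1]$ be the responsiveness of a prediction at $\mathbf{x}$ and fix $\varepsilon\in(0,1)$ and $\alpha\in(0,1)$. Consider testing $H_0:\rho(\mathbf{x})\ge\varepsilon$ versus $H_1:\rho(\mathbf{x})<\varepsilon$ using $n$ i.i.d. reachable points, with empirical responsiveness $\hat\rho_n\in\{0,1/n,\dots,1\}$, by rejecting $H_0$ iff $\mathsf{B}_{1-\alpha}(n\hat\rho_n+1,\ n-n\hat\rho_n)<\varepsilon$, where $\mathsf{B}_q(a,b)$ is the $q$-th quantile of the Beta$(a,b)$ distribution. Then rejecting $H_0$ implies $$n>\frac{\log\alpha}{\log(1-\varepsilon)}.$$
   Context: The responsiveness is $\rho(\mathbf{x})=\Pr[f(\mathbf{x}')\in\mathcal{Y}_T(\mathbf{x})]$ for $\mathbf{x}'$ drawn from a distribution $\mathbb{P}^{\mathrm{reach}}_{\mathbf{x}}$ over points reachable from $\mathbf{x}$ under interventions, where $f$ is a model and $\mathcal{Y}_T(\mathbf{x})$ a target prediction set; $\hat\rho_n$ is the fraction of the $n$ sampled points whose prediction lies in $\mathcal{Y}_T(\mathbf{x})$. A Beta distribution with second parameter $0$ is the point mass at $1$. *)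

(* Defs.v *)
From Stdlib Require Import Reals.
From Coquelicot Require Import Coquelicot.
Open Scope R_scope.

Definition beta_kernel (a b : nat) (t : R) : R :=
  t ^ (a - 1) * (1 - t) ^ (b - 1).

(* CDF of the Beta(a,b) distribution (integer parameters).
   Convention (from the paper): Beta(a,0) is the point mass at 1. *)
Definition beta_cdf (a b : nat) (x : R) : R :=
  match b with
  | O => if Rlt_dec x 1 then 0 else 1
  | S _ =>
      if Rlt_dec x 0 then 0
      else if Rle_dec 1 x then 1
      else RInt (beta_kernel a b) 0 x / RInt (beta_kernel a b) 0 1
  end.

Definition beta_quantile (q : R) (a b : nat) : Rbar :=
  Glb_Rbar (fun x => q <= beta_cdf a b x).

(* Rejection rule of the test H0 : rho >= eps vs H1 : rho < eps, with
   n * rho_hat = k successes among n samples: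
   reject iff B_{1-alpha}(n rho_hat + 1, n - n rho_hat) < eps. *)
Definition rejects_H0 (n k : nat) (alpha eps : R) : Prop :=
  Rbar_lt (beta_quantile (1 - alpha) (k + 1) (n - k)) (Finite eps).

(* Main.v *)
Require Import Defs.
From Stdlib Require Import Reals Lra Lia Psatz FunctionalExtensionality.
From Coquelicot Require Import Coquelicot.
Open Scope R_scope.
Lemma kcont p q : forall z, continuous (fun t => t^p*(1-t)^q) z.
Proof. intros z. apply (@ex_derive_continuous R_AbsRing R_NormedModule). auto_derive. trivial. Qed.
Lemma kint p q a b : ex_RInt (fun t => t^p*(1-t)^q) a b.
Proof. apply (@ex_RInt_continuous R_CompleteNormedModule). intros; apply kcont. Qed.
Definition f (p q : nat) (t : R) := t^p*(1-t)^q.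
Lemma key p q x : 0 <= x <= 1 ->
  (1-x)^(p+q+1) * RInt (fun t => t^p*(1-t)^q) 0 1 <= RInt (fun t => t^p*(1-t)^q) x 1.
Proof.
intros Hx.
change (fun t => t^p*(1-t)^q) with (f p q).
replace (RInt (f p q) x 1) with (RInt (f p q) ((1-x)*0+x) ((1-x)*1+x)) by (f_equal; ring).
rewrite <- RInt_comp_lin by apply kint.
rewrite RInt_scal.
2:{ apply (@ex_RInt_continuous R_CompleteNormedModule). intros. apply (continuous_comp (fun y => (1-x)*y+x) (f p q)).
    apply (@ex_derive_continuous R_AbsRing R_NormedModule). auto_derive. trivial. apply kcont. }
unfold scal; simpl; unfold mult; simpl.
rewrite !pow_add, pow_1.
replace ((1 - x) ^ p * (1 - x) ^ q * (1 - x) * RInt (f p q) 0 1) with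
  ((1-x) * ((1 - x) ^ p * (1 - x) ^ q * RInt (f p q) 0 1)) by ring.
apply Rmult_le_compat_l. lra.
replace ((1 - x) ^ p * (1 - x) ^ q * RInt (f p q) 0 1) with (scal ((1 - x) ^ p * (1 - x) ^ q) (RInt (f p q) 0 1)) by reflexivity.
rewrite <- RInt_scal by apply kint.
apply RInt_le. lra.
 apply (@ex_RInt_continuous R_CompleteNormedModule). intros. apply (continuous_scal_r _ (f p q)), kcont.
 apply (@ex_RInt_continuous R_CompleteNormedModule). intros. apply (continuous_comp (fun y => (1-x)*y+x) (f p q)).
    apply (@ex_derive_continuous R_AbsRing R_NormedModule). auto_derive. trivial. apply kcont.
intros s Hs. unfold scal; simpl; unfold mult; simpl. unfold f.
replace (1 - ((1-x)*s+x)) with ((1-x)*(1-s)) by ring.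
rewrite Rpow_mult_distr.
replace ((1 - x) ^ p * (1 - x) ^ q * (s ^ p * (1 - s) ^ q)) with
  (((1-x)*s)^p * ((1 - x) ^ q * (1 - s) ^ q)) by (rewrite Rpow_mult_distr; ring).
apply Rmult_le_compat_r.
 apply Rmult_le_pos; apply pow_le; lra.
apply pow_incr. split. apply Rmult_le_pos; lra. lra.
Qed.

Lemma powS_lt a b n : 0 <= a < b -> a^(S n) < b^(S n).
Proof.
intros H. induction n. simpl; lra.
change (a ^ S (S n)) with (a * a^(S n)). change (b ^ S (S n)) with (b * b^(S n)).
assert (0 <= a^(S n)) by (apply pow_le; lra). nra.
Qed.

Theorem mainTheorem3 (n k : nat) (rho_hat alpha eps : R) :
  (1 <= n)%nat -> (k <= n)%nat ->
  rho_hat = INR k / INR n ->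
  0 < eps < 1 -> 0 < alpha < 1 ->
  rejects_H0 n k alpha eps ->
  INR n > ln alpha / ln (1 - eps).
Proof.
intros Hn Hk _ He Ha Hrej.
unfold rejects_H0, beta_quantile in Hrej.
set (E := fun x => 1 - alpha <= beta_cdf (k + 1) (n - k) x) in Hrej.
assert (Hx : exists x, E x /\ x < eps).
{ destruct (Classical_Prop.classic (exists x, E x /\ x < eps)) as [H|H]; [exact H|].
  exfalso. apply (Rbar_lt_not_le _ _ Hrej).
  destruct (Glb_Rbar_correct E) as [_ Hg]. apply Hg.
  intros y Ey. simpl. destruct (Rle_dec eps y) as [|Hy]; [assumption|].
  exfalso; apply H; exists y; split; [exact Ey|lra]. }
destruct Hx as [x [Ex Hxe]]. unfold E, beta_cdf in Ex.
assert (Hpow : (1 - x)^n <= alpha).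
{ destruct (n - k)%nat as [|m] eqn:Hb.
  - destruct (Rlt_dec x 1); lra.
  - destruct (Rlt_dec x 0); [lra|]. destruct (Rle_dec 1 x); [lra|].
    assert (HK : beta_kernel (k+1) (S m) = f k m).
    { apply functional_extensionality; intro t. unfold beta_kernel, f.
      replace (k+1-1)%nat with k by lia. replace (S m - 1)%nat with m by lia. reflexivity. }
    rewrite HK in Ex.
    assert (HI1 : 0 <= RInt (f k m) 0 1).
    { apply RInt_ge_0. lra. apply kint. intros t Ht. unfold f.
      apply Rmult_le_pos; apply pow_le; lra. }
    assert (Hch := RInt_Chasles (f k m) 0 x 1 (kint _ _ _ _) (kint _ _ _ _)).
    unfold plus in Hch; simpl in Hch.
    assert (Hkey := key k m x ltac:(lra)).
    replace (k + m + 1)%nat with n in Hkey by lia.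
    destruct (Req_dec (RInt (f k m) 0 1) 0) as [Z|NZ].
    + rewrite Z in Ex. unfold Rdiv in Ex. rewrite Rinv_0, Rmult_0_r in Ex. lra.
    + assert (P : 0 < RInt (f k m) 0 1) by lra.
      assert (RInt (f k m) 0 x / RInt (f k m) 0 1 <= 1 - (1-x)^n).
      { apply (Rmult_le_reg_r (RInt (f k m) 0 1)); [exact P|].
        unfold Rdiv; rewrite Rmult_assoc, Rinv_l by lra. rewrite Rmult_1_r, Rmult_minus_distr_r, Rmult_1_l. idtac.
change (fun t : R => t ^ k * (1 - t) ^ m) with (f k m) in Hkey.       lra. }
      lra. }
destruct n as [|n']; [lia|].
assert (Hlt : (1 - eps)^(S n') < alpha).
{ apply Rlt_le_trans with ((1-x)^(S n')); [|exact Hpow]. apply powS_lt. lra. }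
assert (Hp : 0 < (1-eps)^(S n')) by (apply pow_lt; lra).
assert (Hln := ln_increasing _ _ Hp Hlt). rewrite ln_pow in Hln by lra.
assert (L : ln (1 - eps) < 0) by (rewrite <- ln_1; apply ln_increasing; lra).
set (q := ln alpha / ln (1 - eps)).
assert (ln alpha = q * ln (1 - eps)) by (unfold q; field; lra).
nra.
Qed.
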